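(* Let $(\Omega,\mathcal{F},\mathbb{P})$ be a complete probability space, $E$ a Polish space, and $X=\{X_t\}_{t\geq0}$ an $E$-valued stochastic process, with each atomic proposition $a$ interpreted by a Borel set $B_a\subset E$. Let $\phi_1,\phi_2$ be MTL-formulas such that $\llbracket\phi_1\rrbracket$ and $\llbracket\phi_2\rrbracket$ belong to $\mathcal{F}\otimes\mathcal{B}([0,\infty))$, and let $I$ be an interval in $[0,\infty)$. Then $\{(\omega,t) : X(\omega),t\models\phi_1\mathcal{U}_I\phi_2\}\in\mathcal{F}\otimes\mathcal{B}([0,\infty))$.
   Context: MTL-formulas: $\phi::=a\mid\phi_1\wedge\phi_2\mid\lnot\phi\mid\phi_1\mathcal{U}_I\phi_2$, $I$ an interval in $[0,\infty)$ (any endpoint type, possibly unbounded). Semantics: $X(\omega),t\models a$ iff $X_t(\omega)\in B_a$; $\lnot,\wedge$ classical; $X(\omega),t\models\phi_1\mathcal{U}_I\phi_2$ iff there exists $s\in I$ with $X(\omega),t+s\models\phi_2$ and $X(\omega),s'\models\phi_1$ for all $s'\in[t,t+s)$. $\llbracket\phi\rrbracket:=\{(\omega,t)\in\Omega\times[0,\infty) : X(\omega),t\models\phi\}$. *)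

(* Defs.v *)
From HB Require Import structures.
From mathcomp Require Import all_boot all_order all_algebra.
From mathcomp Require Import all_classical all_reals all_analysis.
Set Implicit Arguments.
Unset Strict Implicit.
Unset Printing Implicit Defensive.
Import Order.TTheory GRing.Theory Num.Theory.
Local Open Scope classical_set_scope.
Local Open Scope ring_scope.

(* Polish space, given via a compatible complete metric (any Polish space
   admits one): complete, Hausdorff, separable (countable dense subset). *)
Definition polish {R : realType} (E : completePseudoMetricType R) : Prop :=
  hausdorff_space E /\ exists D : set E, countable D /\ dense D.

Definition borel_set (E : topologicalType) (B : set E) : Prop :=
  <<s (@open E) >> B.

Inductive mtl (AP : Type) (R : realType) : Type :=
| MAtom of AP
| MAnd of mtl AP R & mtl AP R
| MNot of mtl AP R
| MUntil of interval R & mtl AP R & mtl AP R.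

Arguments MAtom {AP R}.
Arguments MAnd {AP R}.
Arguments MNot {AP R}.
Arguments MUntil {AP R}.

Fixpoint mtl_wf (AP : Type) (R : realType) (phi : mtl AP R) : Prop :=
  match phi with
  | MAtom _ => True
  | MAnd p q => mtl_wf p /\ mtl_wf q
  | MNot p => mtl_wf p
  | MUntil J p q => (forall s : R, s \in J -> 0 <= s) /\ mtl_wf p /\ mtl_wf q
  end.

(* X(omega), t |= phi ; the process is indexed by R but only times >= 0
   are ever consulted when t >= 0 and the formula is well-formed. *)
Fixpoint mtl_sat (AP : Type) (R : realType) (Omega E : Type)
    (X : R -> Omega -> E) (B : AP -> set E) (phi : mtl AP R)
    (omega : Omega) (t : R) : Prop :=
  match phi with
  | MAtom a => B a (X t omega)
  | MAnd p q => mtl_sat X B p omega t /\ mtl_sat X B q omega t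
  | MNot p => ~ mtl_sat X B p omega t
  | MUntil J p q =>
      exists s : R, s \in J /\ mtl_sat X B q omega (t + s) /\
        (forall s' : R, t <= s' -> s' < t + s -> mtl_sat X B p omega s')
  end.

Definition mtl_den (AP : Type) (R : realType) (Omega E : Type)
    (X : R -> Omega -> E) (B : AP -> set E) (phi : mtl AP R)
    : set (Omega * R) :=
  [set p | 0 <= p.2 /\ mtl_sat X B phi p.1 p.2].

(* Main.v *)
Require Import Defs.
From HB Require Import structures.
From mathcomp Require Import all_boot all_order all_algebra.
From mathcomp Require Import all_classical all_reals all_analysis.
From Stdlib Require Cantor Lia.
From mathcomp.algebra_tactics Require Import ring lra.
From mathcomp Require Import measurable_realfun.
Import Order.TTheory GRing.Theory Num.Theory numFieldNormedType.Exports.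
Local Open Scope classical_set_scope.
Local Open Scope ring_scope.


Section hull.
Context d (T : measurableType d) (R : realType) (P : probability T R).

Lemma hull_ex (A : set T) : exists H, [/\ measurable H, A `<=` H &
  forall B, measurable B -> A `<=` B -> (P H <= P B)%E].
Proof.
pose S := [set P B | B in [set B | measurable B /\ A `<=` B]].
pose m := ereal_inf S.
have m0 : (0 <= m)%E by apply: le_ereal_inf_tmp => _ [B _ <-].
have m1 : (m <= 1)%E.
  rewrite -(probability_setT P); apply: ereal_inf_lbound.
  by exists setT.
have mfin : m \is a fin_num by rewrite ge0_fin_numE // (le_lt_trans m1) ?ltry.
have /choice[Bn HB] : forall n : nat, exists B, (measurable B /\ A `<=` B) /\
    (P B < m + (n.+1%:R^-1)%:E)%E.
  move=> n; have n0 : 0 < n.+1%:R^-1 :> R by rewrite invr_gt0 ltr0Sn.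
  have [_ [B HB <-] HBm] := @lb_ereal_inf_adherent R S _ n0 mfin.
  by exists B.
exists (\bigcap_n Bn n); split.
- by apply: bigcapT_measurable => n; case: (HB n) => -[].
- by move=> x Ax n _; case: (HB n) => -[_ /(_ x Ax)].
move=> B mB AB.
have HmB : (m <= P B)%E by apply: ereal_inf_lbound; exists B.
apply: le_trans HmB; apply/lee_addgt0Pr => e e0.
have [k Hk] := ltr_add_invr e0.
apply: (@le_trans _ _ (P (Bn k))).
  apply: le_measure; rewrite ?inE.
  - by apply: bigcapT_measurable => n; case: (HB n) => -[].
  - by case: (HB k) => -[].
  by move=> x /(_ k I).
apply: ltW; apply: (lt_le_trans (proj2 (HB k))).
rewrite leeD2l // lee_fin; rewrite add0r in Hk; exact: ltW.
Qed.
End hull.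

Lemma mkseqS_rcons {A : Type} (f : nat -> A) n : mkseq f n.+1 = rcons (mkseq f n) (f n).
Proof. by rewrite /mkseq -addn1 iotaD map_cat cats1 /=. Qed.

Fixpoint pref (g : seq nat -> nat) (n : nat) : seq nat :=
  if n is m.+1 then rcons (pref g m) (g (pref g m)) else [::].

Lemma pref_mkseq g n : pref g n = mkseq (fun i => g (pref g i)) n.
Proof. by elim: n => [//|n IH] /=; rewrite mkseqS_rcons -IH. Qed.

Section sousT.
Context d (T : measurableType d) (R : realType) (P : probability T R).

Hypothesis hull_ex : forall (A : set T), exists H, [/\ measurable H, A `<=` H &
  forall B, measurable B -> A `<=` B -> (P H <= P B)%E].

Definition sousT (E : seq nat -> set T) :=
  [set w | exists f : nat -> nat, forall n, E (mkseq f n.+1) w].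

Lemma sousT_meas (E : seq nat -> set T) : measure_is_complete P ->
  (forall s, measurable (E s)) -> measurable (sousT E).
Proof.
move=> cP mE.
pose S_ (s : seq nat) := [set w | exists f : nat -> nat,
  mkseq f (size s) = s /\ forall n, E (mkseq f n.+1) w].
have /choice[Hl HH] := fun s => hull_ex (S_ s).
pose H' s := Hl s `&` (if size s == 0%N then setT else E s).
have mH' s : measurable (H' s).
  apply: measurableI; first by case: (HH s).
  by case: (size s == 0%N).
have SH' s : S_ s `<=` H' s.
  move=> w Sw; split; first by case: (HH s) => _ /(_ w Sw).
  case: eqP => // ss0; case: Sw => f [fs /(_ (size s).-1)].
  by rewrite prednK ?lt0n ?fs //; apply/eqP.
have PH' s B : measurable B -> S_ s `<=` B -> (P (H' s) <= P B)%E.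
  move=> mB SB; apply: le_trans (_ : (P (Hl s) <= _)%E).
    by apply: le_measure; rewrite ?inE //; [case: (HH s)|apply: subIsetl].
  by case: (HH s) => _ _; apply.
pose N s := H' s `\` \bigcup_k H' (rcons s k).
have mbig s : measurable (\bigcup_k H' (rcons s k)).
  by apply: bigcupT_measurable => k.
have N0 s : P (N s) = 0%E.
  apply/eqP; rewrite -measure_le0.
  rewrite /N measureD //; last by rewrite (le_lt_trans (probability_le1 _ _)) ?ltry.
  rewrite sube_le0; apply: PH'; first exact: measurableI.
  move=> w Sw; split; first exact: SH'.
  case: Sw => f [fs Hf]; exists (f (size s)) => //; apply: SH'.
  exists f; split; last exact: Hf.
  by rewrite size_rcons mkseqS_rcons fs.
pose FN n := if @unpickle (seq nat) n is Some s then N s else set0.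
pose Nall := \bigcup_n FN n.
have negN : P.-negligible Nall.
  have hF : forall k, P.-negligible (FN k).
    move=> n; rewrite /FN; case: (unpickle n) => [s|]; last exact: negligible_set0.
    by exists (N s); split => //; apply: measurableD.
  exact: negligible_bigcup hF.
have NN s : N s `<=` Nall by move=> w Nw; exists (pickle s) => //; rewrite /FN pickleK.
have claim : H' [::] `\` Nall `<=` sousT E.
  move=> w [Hw nNw].
  have step s : H' s w -> exists k, H' (rcons s k) w.
    move=> Hsw; apply: contra_notP nNw => nk; apply: (NN s); split => //.
    by move=> [k _ Hk]; apply: nk; exists k.
  have /choice[g Hg] : forall s, exists k, H' s w -> H' (rcons s k) w.
    move=> s; have [/step[k Hk]|nH] := pselect (H' s w).
      by exists k.
    by exists 0%N.
  have Hp n : H' (pref g n) w by elim: n => [//|n IH] /=; exact: Hg.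
  exists (fun i => g (pref g i)) => n.
  have := Hp n.+1; rewrite -pref_mkseq /H' /=.
  by rewrite size_rcons => -[].
have sH : sousT E `<=` H' [::].
  by move=> w [f Hf]; apply: SH'; exists f.
have -> : sousT E = H' [::] `\` (H' [::] `\` sousT E).
  by rewrite setDD setIidr.
apply: measurableD => //; apply: cP; apply: negligibleS negN.
move=> w [Hw nw]; apply: contra_notP nw => nN; exact: claim.
Qed.
End sousT.


Lemma take_mkseq' {A : Type} (f : nat -> A) k n : (k <= n)%N ->
  take k (mkseq f n) = mkseq f k.
Proof. by move=> kn; rewrite /mkseq -map_take take_iota (minn_idPl kn). Qed.

Lemma mkseqS_cons {A : Type} (f : nat -> A) n :
  mkseq f n.+1 = f 0%N :: mkseq (fun i => f i.+1) n.
Proof. by rewrite /mkseq /= -[1%N]addn0 iotaDl -map_comp. Qed.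

Lemma to_nat_mono k i m : (i <= m)%N -> (Cantor.to_nat (k, i) <= Cantor.to_nat (k, m))%N.
Proof.
move/ssrnat.leP => im; apply/ssrnat.leP.
have h1 := Cantor.to_nat_spec k i; have h2 := Cantor.to_nat_spec k m.
Lia.nia.
Qed.

Section sousR.
Context d (T : measurableType d) (R : realType).

Definition rect (c : set T * R * R) : set (T * R) := c.1.1 `*` `[c.1.2, c.2].

Definition sousR (C : seq nat -> set T * R * R) :=
  [set x | exists f : nat -> nat, forall n, rect (C (mkseq f n.+1)) x].

Definition SOUS (A : set (T * R)) :=
  exists C, (forall s, measurable (C s).1.1) /\ A = sousR C.

Lemma proj_sousR C : fst @` sousR C = @sousT _ T (fun s =>
  [set w | (forall k, (k < size s)%N -> (C (take k.+1 s)).1.1 w) /\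
    (forall k l, (k < size s)%N -> (l < size s)%N ->
       (C (take k.+1 s)).1.2 <= (C (take l.+1 s)).2)]).
Proof.
apply/seteqP; split.
  move=> _ [[w t] [f Hf] <-]; exists f => n; cbv beta; rewrite size_mkseq; split.
    by move=> k kn; rewrite take_mkseq' //; case: (Hf k).
  move=> k l kn ln; rewrite !take_mkseq' //.
  case: (Hf k) => _; rewrite /= in_itv /= => /andP[+ _].
  case: (Hf l) => _; rewrite /= in_itv /= => /andP[_ +].
  by move=> h1 h2; apply: le_trans h2 h1.
move=> w [f Hf].
pose a n := (C (mkseq f n.+1)).1.2; pose b n := (C (mkseq f n.+1)).2.
have Fw n : (C (mkseq f n.+1)).1.1 w.
  have [h _] := Hf n; rewrite size_mkseq in h.
  by move: (h n (ltnSn n)); rewrite take_oversize ?size_mkseq.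
have ab k l : a k <= b l.
  have [_ h2] := Hf (maxn k l); move: (h2 k l); rewrite size_mkseq !take_mkseq' ?ltnS ?leq_max ?leqnn ?orbT //.
  by apply; rewrite ?ltnS ?leq_max ?leqnn ?orbT.
have ne : range a !=set0 by exists (a 0%N); exists 0%N.
have hs : has_sup (range a).
  by split => //; exists (b 0%N) => _ [m _ <-]; exact: ab.
exists (w, sup (range a)) => //.
exists f => n; split => //=; rewrite in_itv /=; apply/andP; split.
  by apply: sup_upper_bound => //; exists n.
by apply: ge_sup => // _ [k _ <-]; exact: ab.
Qed.


Lemma eq_mkseq_in {A : Type} (f g : nat -> A) n :
  (forall i, (i < n)%N -> f i = g i) -> mkseq f n = mkseq g n.
Proof. by move=> H; apply/eq_in_map => i; rewrite mem_iota add0n => /andP[_]; exact: H. Qed.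

Lemma SOUS_rect F a b : measurable F -> SOUS (F `*` `[a, b]).
Proof.
move=> mF; exists (fun _ => (F, a, b)); split => //.
apply/seteqP; split => [x Fx|x [f /(_ 0%N) //]].
by exists (fun _ => 0%N).
Qed.

Lemma SOUS_bigcup (A : nat -> set (T * R)) :
  (forall n, SOUS (A n)) -> SOUS (\bigcup_n A n).
Proof.
move=> HA; have /choice[C HC] := HA.
exists (fun s => match s with
  | h :: t => C (Cantor.of_nat h).1 ((Cantor.of_nat h).2 :: t)
  | [::] => C 0%N [::] end); split.
  by case => [|h t]; [exact: (proj1 (HC 0%N))|exact: (proj1 (HC _))].
apply/seteqP; split.
  move=> x [k _]; case: (HC k) => _ -> [f Hf].
  exists (fun i => if i is j.+1 then f j.+1 else Cantor.to_nat (k, f 0%N)) => n.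
  rewrite mkseqS_cons Cantor.cancel_of_to /=.
  by move: (Hf n); rewrite mkseqS_cons.
move=> x [f Hf]; set p := Cantor.of_nat (f 0%N).
exists p.1 => //; case: (HC p.1) => _ ->.
exists (fun i => if i is j.+1 then f j.+1 else p.2) => n.
by move: (Hf n); rewrite !mkseqS_cons.
Qed.

Lemma SOUS_bigcap (A : nat -> set (T * R)) :
  (forall n, SOUS (A n)) -> SOUS (\bigcap_n A n).
Proof.
move=> HA; have /choice[C HC] := HA.
exists (fun s => let km := Cantor.of_nat (size s).-1 in
  C km.1 (mkseq (fun i => nth 0%N s (Cantor.to_nat (km.1, i))) km.2.+1)); split.
  by move=> s /=; exact: (proj1 (HC _)).
apply/seteqP; split.
  move=> x Ax.
  have /choice[fk Hfk] : forall k, exists f : nat -> nat,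
      forall m, rect (C k (mkseq f m.+1)) x.
    by move=> k; case: (HC k) => _ Ak; move: (Ax k I); rewrite Ak.
  exists (fun j => fk (Cantor.of_nat j).1 (Cantor.of_nat j).2) => n.
  cbv beta zeta; rewrite size_mkseq succnK.
  set km := Cantor.of_nat n.
  rewrite (@eq_mkseq_in _ _ (fk km.1)); first exact: Hfk.
  move=> i im; rewrite nth_mkseq; first by cbv beta; rewrite Cantor.cancel_of_to.
  rewrite ltnS; apply: leq_trans (@to_nat_mono km.1 i km.2 im) _.
  by rewrite -surjective_pairing Cantor.cancel_to_of.
move=> x [f Hf] k _; case: (HC k) => _ ->.
exists (fun i => f (Cantor.to_nat (k, i))) => m.
move: (Hf (Cantor.to_nat (k, m))); cbv beta zeta; rewrite size_mkseq succnK Cantor.cancel_of_to.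
rewrite (@eq_mkseq_in _ _ (fun i => f (Cantor.to_nat (k, i)))) //.
move=> i im; rewrite nth_mkseq //; rewrite ltnS; exact: to_nat_mono.
Qed.

Lemma SOUS_X2 F (a b : nat -> nat -> R) (G : set R) : measurable F ->
  (forall t, G t <-> exists n m, a n m <= t <= b n m) -> SOUS (F `*` G).
Proof.
move=> mF HG.
have -> : F `*` G = \bigcup_n \bigcup_m (F `*` `[a n m, b n m]).
  apply/seteqP; split; last first.
    move=> x [n _ [m _ [/= Fw]]]; rewrite in_itv /= => H; split => //.
    by apply/HG; exists n, m.
  case=> w t [Fw /HG[n [m H]]]; exists n => //; exists m => //.
by apply: SOUS_bigcup => n; apply: SOUS_bigcup => m; exact: SOUS_rect.
Qed.

End sousR.
Arguments rect {d T R}.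
Arguments sousR {d T R}.
Arguments SOUS {d T R}.
Arguments proj_sousR {d T R}.
Arguments SOUS_rect {d T R}.
Arguments SOUS_bigcup {d T R}.
Arguments SOUS_bigcap {d T R}.
Arguments SOUS_X2 {d T R}.


Section prodD.
Context d (T : measurableType d) (R : realType).

Lemma SOUS_set0 : SOUS (set0 : set (T * R)).
Proof. by rewrite -(set0X `[0 : R, 0]); apply: SOUS_rect. Qed.

Lemma SOUS_setU (A B : set (T * R)) : SOUS A -> SOUS B -> SOUS (A `|` B).
Proof.
move=> HA HB; rewrite -bigcup2E; apply: SOUS_bigcup => -[|[|n]] //=.
exact: SOUS_set0.
Qed.

Lemma exists_nat_gt (t : R) : exists n : nat, t < n%:R.
Proof. by exists (Num.truncn t).+1; exact: truncnS_gt. Qed.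

Lemma SOUS_XT (F : set T) : measurable F -> SOUS (F `*` (setT : set R)).
Proof.
move=> mF; apply: (@SOUS_X2 _ _ _ F (fun n m => - n%:R) (fun n m => m%:R)) => // t.
split => // _.
have [n Hn] := exists_nat_gt (- t); have [m Hm] := exists_nat_gt t.
exists n, m; rewrite lerNl (ltW Hn) /=; exact: ltW.
Qed.

Lemma SOUS_oc (a b : R) : SOUS ((setT : set T) `*` `]a, b]).
Proof.
apply: (@SOUS_X2 _ _ _ setT (fun n m => a + n.+1%:R^-1) (fun n m => b)) => // t.
rewrite /= in_itv /=; split.
  move=> /andP[at1 tb]; have [k Hk] := ltr_add_invr at1.
  by exists k, 0%N; rewrite tb (ltW Hk).
move=> [n [_ /andP[H1 ->]]]; rewrite andbT; apply: lt_le_trans H1.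
by rewrite ltrDl invr_gt0 ltr0Sn.
Qed.

Lemma SOUS_Coc (a b : R) : SOUS (~` ((setT : set T) `*` `]a, b])).
Proof.
have -> : ~` ((setT : set T) `*` `]a, b]) =
    (setT `*` [set t | t <= a]) `|` (setT `*` [set t | b < t]).
  apply/seteqP; split => -[w t] /=.
    move=> h; have : ~~ ((a < t) && (t <= b)).
      by apply/ssrbool.negP => H; apply: h; split => //=; rewrite in_itv.
    rewrite negb_and -leNgt -ltNge => /orP[h'|h'].
      by left.
    by right.
  rewrite in_itv /=; move=> [[_ /= h]|[_ /= h]] [_ /andP[h1 h2]].
    by move: (lt_le_trans h1 h); rewrite ltxx.
  by move: (le_lt_trans h2 h); rewrite ltxx.
apply: SOUS_setU.
  apply: (@SOUS_X2 _ _ _ setT (fun n m => - n%:R) (fun n m => a)) => // t.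
  split => [/= ta|[n [m /andP[_ H]]] //].
  have [n Hn] := exists_nat_gt (- t); exists n, 0%N.
  by rewrite ta andbT lerNl ltW.
apply: (@SOUS_X2 _ _ _ setT (fun n m => b + n.+1%:R^-1) (fun n m => m%:R)) => // t.
split => [/= bt|[n [m /andP[H1 _]]]].
  have [k Hk] := ltr_add_invr bt; have [m Hm] := exists_nat_gt t.
  by exists k, m; rewrite (ltW Hk) (ltW Hm).
rewrite /=; apply: lt_le_trans H1.
by rewrite ltrDl invr_gt0 ltr0Sn.
Qed.

Definition DD := [set A : set (T * R) | SOUS A /\ SOUS (~` A)].

Lemma sigma_DD : sigma_algebra setT DD.
Proof.
split.
- by split; [exact: SOUS_set0|rewrite setC0 -setXTT; exact: SOUS_XT].
- by move=> A [h1 h2]; rewrite setTD; split => //; rewrite setCK.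
- move=> A HA; split; first by apply: SOUS_bigcup => n; case: (HA n).
  by rewrite setC_bigcup; apply: SOUS_bigcap => n; case: (HA n).
Qed.

Lemma measurable_DD (A : set (T * R)) : measurable A -> DD A.
Proof.
move=> mA; apply: (smallest_sub sigma_DD _ mA).
move=> _ [[B mB <-]|[B mB <-]].
  rewrite setTI -setXT; split; first exact: SOUS_XT.
  have -> : ~` (B `*` setT) = (~` B) `*` (setT : set R).
    by apply/seteqP; split => -[w t] //=; rewrite /setX /=; tauto.
  by apply: SOUS_XT; exact: measurableC.
rewrite setTI -setTX.
have sD2 : sigma_algebra setT [set B : set R | DD (setT `*` B)].
  split.
  - by rewrite /= setX0; case: sigma_DD.
  - move=> C HC; rewrite /=.
    have -> : (setT : set T) `*` (setT `\` C) = setT `\` (setT `*` C).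
      by apply/seteqP; split => -[w t] //=; rewrite /setX /setD /=; tauto.
    by case: sigma_DD => _ + _; apply.
  - move=> C HC; rewrite /= setX_bigcupr.
    by case: sigma_DD => _ _; apply.
apply: (smallest_sub sD2 _ mB).
move=> _ [[x y] _ <-]; split; [exact: SOUS_oc|exact: SOUS_Coc].
Qed.


Lemma proj_meas (P : probability T R) : measure_is_complete P ->
  forall A : set (T * R), measurable A -> measurable (fst @` A).
Proof.
move=> cP A /measurable_DD [[C [mC ->]] _].
rewrite proj_sousR.
apply: (@sousT_meas _ T R P (@hull_ex _ T R P)) => // s.
set Q := (forall k l, _).
have -> : [set w | (forall k, (k < size s)%N -> (C (take k.+1 s)).1.1 w) /\ Q] =
   (\bigcap_(k in [set k | (k < size s)%N]) (C (take k.+1 s)).1.1) `&` [set _ | Q].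
  by apply/seteqP; split => w [h1 h2]; split => // k; apply: h1.
apply: measurableI; first by apply: bigcap_measurableType => k _; exact: mC.
have [q|nq] := pselect Q.
  by rewrite (_ : [set _ | Q] = setT) //; apply/seteqP; split.
by rewrite (_ : [set _ | Q] = set0) //; apply/seteqP; split.
Qed.

End prodD.


Section S.
Context (R : realType).
Definition obl (l : itv_bound R) := if l is BSide _ a then BRight a else l.
Definition obr (r : itv_bound R) := if r is BSide _ b then BLeft b else r.
Definition ointv (I : interval R) : set R :=
  let: Interval l r := I in
  if itv_open_ends (Interval (obl l) (obr r)) then [set` Interval (obl l) (obr r)] else set0.
Definition bval (l : itv_bound R) := if l is BSide _ a then a else 0.
Definition iend (I : interval R) := let: Interval l r := I in (bval l, bval r).

Lemma ointv_open I : open (ointv I).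
Proof.
case: I => l r /=; case: ifP => h; last exact: open0.
exact: itv_open_ends_open.
Qed.

Lemma ointv_is_interval I : is_interval (ointv I).
Proof.
case: I => l r /=; case: ifP => h; first exact: interval_is_interval.
by move=> ? ? [].
Qed.

Lemma ointv_sub I : ointv I `<=` [set` I].
Proof.
case: I => l r /=; case: ifP => _ // s /=.
case: l => [[] a|[]]; case: r => [[] b|[]]; rewrite /= ?in_itv /= ?andbT ?andbF //=.
all: try (by move=> /andP[h1 h2]; rewrite ?h1 ?h2 ?(ltW h1) ?(ltW h2)).
all: by move/ltW.
Qed.

Lemma endl (a s : R) : a <= s -> ~ a < s -> s = a.
Proof. by move=> h1 h2; apply/eqP; rewrite eq_le h1 andbT leNgt; apply/ssrbool.negP. Qed.
Lemma endr (s b : R) : s <= b -> ~ s < b -> s = b.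
Proof. by move=> h1 h2; apply/eqP; rewrite eq_le h1 /= leNgt; apply/ssrbool.negP. Qed.

Lemma ointv_end I s : s \in I -> ~ ointv I s -> s = (iend I).1 \/ s = (iend I).2.
Proof.
case: I => l r /=.
case: l => [[] a|[]]; case: r => [[] b|[]]; rewrite /= ?in_itv /= ?andbT ?andbF //=.
- move=> /andP[h1 h2] hn; left; apply: endl h1 _ => h; apply: hn; by rewrite h h2.
- move=> /andP[h1 h2] hn; have [h|h] := boolP (a < s).
    by right; apply: endr h2 _ => h'; apply: hn; rewrite h h'.
  by left; apply: endl h1 _ => h'; move/negP: h; apply.
- by move=> h1 hn; left; apply: endl h1 hn.
- move=> /andP[h1 h2] hn; right; apply: endr h2 _ => h; apply: hn; by rewrite h h1.
- by move=> h1 hn; right; apply: endr h1 hn.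
Qed.

End S.

Section GL.
Context d (T : measurableType d) (R : realType) (P : probability T R).
Hypothesis cP : measure_is_complete P.

Lemma mpre (f : T * R -> R) (Y : set R) : measurable_fun setT f ->
  measurable Y -> measurable [set z | Y (f z)].
Proof. by move=> mf mY; have := mf measurableT Y mY; rewrite setTI. Qed.

Lemma mpre2 (f : T * R -> T * R) (Y : set (T * R)) : measurable_fun setT f ->
  measurable Y -> measurable [set z | Y (f z)].
Proof. by move=> mf mY; have := mf measurableT Y mY; rewrite setTI. Qed.

Lemma mlt (f : T * R -> R) (c : R) : measurable_fun setT f ->
  measurable [set z | f z < c].
Proof.
move=> mf; rewrite (_ : [set z | f z < c] = [set z | `]-oo, c[%classic (f z)]).
  by apply: mpre => //; exact: measurable_itv.
by apply/seteqP; split => z /=; rewrite in_itv /= ?andbT.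
Qed.

Lemma mgt (f : T * R -> R) (c : R) : measurable_fun setT f ->
  measurable [set z | c < f z].
Proof.
move=> mf; rewrite (_ : [set z | c < f z] = [set z | `]c, +oo[%classic (f z)]).
  by apply: mpre => //; exact: measurable_itv.
by apply/seteqP; split => z /=; rewrite in_itv /= ?andbT.
Qed.

Lemma GL (A : set (T * R)) (x y : T * R -> R) (S : set R) :
  measurable A -> measurable_fun setT x -> measurable_fun setT y ->
  open S -> is_interval S ->
  measurable [set z | exists u, x z < u < y z /\ S (u - x z) /\ A (z.1, u)].
Proof.
move=> mA mx my oS iS.
have -> : [set z | exists u, x z < u < y z /\ S (u - x z) /\ A (z.1, u)] =
  \bigcup_(q1 : rat) \bigcup_(q2 : rat)
   ([set z | x z < ratr q1] `&` [set z | ratr q2 < y z] `&`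
    [set z | S (ratr q1 - x z)] `&` [set z | S (ratr q2 - x z)] `&`
    [set z | (fst @` (A `&` (setT `*` `]ratr q1, ratr q2[))) z.1]).
  apply/seteqP; split.
    move=> z [u [/andP[xu uy] [Su Au]]].
    have : nbhs (u - x z) S by apply: open_nbhs_nbhs; split.
    move=> /nbhs_ballP[e /= e0 he].
    have h1 : Num.max (x z) (u - e) < u by rewrite gt_max xu /=; lra.
    have h2 : u < Num.min (y z) (u + e) by rewrite lt_min uy /=; lra.
    have [q1] := rat_in_itvoo h1; rewrite in_itv /= gt_max => /andP[/andP[xq1 uq1] q1u].
    have [q2] := rat_in_itvoo h2; rewrite in_itv /= lt_min => /andP[uq2 /andP[q2y q2u]].
    exists q1 => //; exists q2 => //; split; [split; [split; [split|]|]|].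
    - by [].
    - by [].
    - apply: he; rewrite -ball_normE /= ger0_norm; lra.
    - apply: he; rewrite -ball_normE /= ler0_norm; lra.
    - exists (z.1, u) => //; split => //; split => //=; rewrite in_itv /=; lra.
  move=> z [q1 _ [q2 _ [[[[xq1 q2y] Sq1] Sq2] [[w u] [Au [_ uin]] /= wz]]]].
  move: uin; rewrite /= in_itv /= => /andP[q1u uq2].
  rewrite /= in xq1 q2y Sq1 Sq2.
  exists u; split; first by apply/andP; split; lra.
  split; last by rewrite -wz.
  by apply: (iS _ _ Sq1 Sq2); apply/andP; split; lra.
have mfst (B : set T) : measurable B -> measurable [set z : T * R | B z.1].
  by move=> mB; rewrite -[X in measurable X]setTI; exact: (measurable_fst measurableT _ mB).
apply: bigcupT_measurable_rat => q1; apply: bigcupT_measurable_rat => q2.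
apply: measurableI; last first.
  apply: mfst; apply: (@proj_meas _ T R P cP); apply: measurableI => //.
  by apply: measurableX => //; exact: measurable_itv.
apply: measurableI; last first.
  by apply: mpre (open_measurable oS); apply: measurable_funB => //; exact: measurable_cst.
apply: measurableI; last first.
  by apply: mpre (open_measurable oS); apply: measurable_funB => //; exact: measurable_cst.
apply: measurableI.
  exact: mlt.
exact: mgt.
Qed.
End GL.
Arguments ointv {R}.
Arguments iend {R}.
Arguments ointv_open {R}.
Arguments ointv_is_interval {R}.
Arguments ointv_sub {R}.
Arguments ointv_end {R}.


Section main.
Context d (T : measurableType d) (R : realType) (P : probability T R).
Hypothesis cP : measure_is_complete P.
Variables (A1 A2 : set (T * R)).
Hypotheses (mA1 : measurable A1) (mA2 : measurable A2).
Variable I : interval R.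

Let mfst' := @mpre2 _ T R.
Let mGL := @GL _ T R P cP.

Lemma mconst (Q : Prop) : measurable [set _ : T * R | Q].
Proof.
have [q|nq] := pselect Q.
  by rewrite (_ : [set _ | Q] = setT) //; apply/seteqP; split.
by rewrite (_ : [set _ | Q] = set0) //; apply/seteqP; split.
Qed.

Lemma mge (f : T * R -> R) (c : R) : measurable_fun setT f ->
  measurable [set z | c <= f z].
Proof.
move=> mf; rewrite (_ : [set z | c <= f z] = ~` [set z | f z < c]).
  by apply: measurableC; exact: mlt.
by apply/seteqP; split => z /=; rewrite leNgt => /ssrbool.negP.
Qed.

Lemma mfstset (B : set T) : measurable B -> measurable [set z : T * R | B z.1].
Proof. by move=> mB; rewrite -[X in measurable X]setTI; exact: (measurable_fst measurableT _ mB). Qed.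

Lemma msnd_add (e : R) : measurable_fun setT (fun z : T * R => z.2 + e).
Proof. by apply: measurable_funD => //; exact: measurable_cst. Qed.

Lemma mpair_cst (c : R) : measurable_fun setT (fun z : T * R => (z.1, c)).
Proof. by apply: measurable_fun_pair => //; exact: measurable_cst. Qed.

Lemma mpair_add (e : R) : measurable_fun setT (fun z : T * R => (z.1, z.2 + e)).
Proof. by apply: measurable_fun_pair => //; exact: msnd_add. Qed.

Lemma m_nobad (A : set (T * R)) (x y : T * R -> R) : measurable A ->
  measurable_fun setT x -> measurable_fun setT y ->
  measurable [set z | ~ exists u, x z < u < y z /\ ~ A (z.1, u)].
Proof.
move=> mA mx my.
rewrite (_ : [set z | _] = ~` [set z | exists u, x z < u < y z /\
   (setT : set R) (u - x z) /\ (~` A) (z.1, u)]).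
  apply: measurableC.
  have := @GL _ T R P cP (~` A) x y setT (measurableC mA) mx my openT.
  by apply.
apply/seteqP; split => z /=.
  by move=> h [u [h1 [_ h2]]]; apply: h; exists u.
by move=> h [u [h1 h2]]; apply: h; exists u.
Qed.

Definition onco (z : T * R) (c : R) :=
  A1 z /\ ~ (exists u, z.2 < u < c /\ ~ A1 (z.1, u)).

Lemma m_onco (c : R) : measurable [set z | onco z c].
Proof.
apply: (measurableI _ _ mA1).
by apply: m_nobad => //; exact: measurable_cst.
Qed.

Definition K (q : R) := [set p : T * R | q < p.2 /\ A1 (p.1, q) /\
  ~ (exists w, q < w < p.2 /\ ~ A1 (p.1, w)) /\
  ~ (exists q' : rat, p.2 < ratr q' /\ A1 (p.1, q) /\
       ~ (exists w, q < w < ratr q' /\ ~ A1 (p.1, w))) /\ A2 p].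

Lemma mK q : measurable (K q).
Proof.
apply: measurableI; first exact: mgt.
apply: measurableI; first by apply: mfst' mA1; exact: mpair_cst.
apply: measurableI; first by apply: m_nobad => //; exact: measurable_cst.
apply: measurableI => //.
set G := (X in measurable X).
rewrite (_ : G = ~` \bigcup_(q' : rat) ([set p : T * R | p.2 < ratr q'] `&`
   [set p | A1 (p.1, q)] `&` [set p | ~ (exists w, q < w < ratr q' /\ ~ A1 (p.1, w))])).
  apply: measurableC; apply: bigcupT_measurable_rat => q'.
  apply: measurableI; first apply: measurableI.
  - exact: mlt.
  - by apply: mfst' mA1; exact: mpair_cst.
  - by apply: m_nobad => //; exact: measurable_cst.
apply/seteqP; split => p; rewrite /G /=.
  by move=> h [q' _ [[h1 h2] h3]]; apply: h; exists q'.
by move=> h [q' [h1 [h2 h3]]]; apply: h; exists q' => //.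
Qed.

Lemma K_uniq q w u1 u2 : K q (w, u1) -> K q (w, u2) -> u1 = u2.
Proof.
wlog : u1 u2 / u1 < u2.
  move=> H k1 k2; case: (ltgtP u1 u2) => h //.
    exact: H.
  by apply/esym; apply: H.
move=> u12 [_ [_ [_ [nq _]]]] [_ [a1 [nb _]]].
have [q' ] := rat_in_itvoo u12; rewrite in_itv /= => /andP[h1 h2].
exfalso; apply: nq; exists q'; split => //; split => //.
move=> [v [/andP[qv vq'] nv]]; apply: nb; exists v; split => //.
by rewrite qv /= (lt_trans vq' h2).
Qed.

Definition h (q : R) (w : T) : R :=
  if pselect (exists u, K q (w, u)) is left e then projT1 (cid e) else 0.

Lemma hK q w : (exists u, K q (w, u)) -> K q (w, h q w).
Proof.
rewrite /h; case: pselect => // e _.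
by case: (cid e).
Qed.

Lemma mh q : measurable_fun setT (h q).
Proof.
move=> _ Y mY; rewrite setTI.
rewrite (_ : h q @^-1` Y = (fst @` (K q `&` (setT `*` Y))) `|`
   (~` (fst @` K q) `&` [set _ | Y 0])).
  apply: measurableU.
    apply: (@proj_meas _ T R P cP); apply: measurableI; first exact: mK.
    exact: measurableX.
  apply: measurableI; first by apply: measurableC; apply: (@proj_meas _ T R P cP); exact: mK.
  have [y0|ny0] := pselect (Y 0).
    by rewrite (_ : [set _ | Y 0] = setT) //; apply/seteqP; split.
  by rewrite (_ : [set _ | Y 0] = set0) //; apply/seteqP; split.
apply/seteqP; split => w /=.
  move=> Yh; have [ex|nex] := pselect (exists u, K q (w, u)).
    by left; exists (w, h q w) => //; split => //; exact: hK.
  right; split; first by move=> [[w' u] Ku /= ww']; apply: nex; exists u; rewrite -ww'.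
  by move: Yh; rewrite /h; case: pselect.
move=> [[[w' u] [Ku [_ Yu]] /= ww']|[nK Y0]].
  have ex : exists u, K q (w, u) by exists u; rewrite -ww'.
  have := hK _ _ ex; subst w' => /(K_uniq _ _ _ _ Ku) <-; exact: Yu.
rewrite /h; case: pselect => // -[u Ku].
by exfalso; apply: nK; exists (w, u).
Qed.

End main.


Section main2.
Context d (T : measurableType d) (R : realType) (P : probability T R).
Hypothesis cP : measure_is_complete P.
Variables (A1 A2 : set (T * R)).
Hypotheses (mA1 : measurable A1) (mA2 : measurable A2).
Variable I : interval R.
Hypothesis hI : forall s, s \in I -> 0 <= s.

Let onco := @onco _ T R A1.
Let K := @K _ T R A1 A2.
Let h := @h _ T R A1 A2.

Definition U := [set z : T * R | 0 <= z.2 /\ exists s, s \in I /\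
  A2 (z.1, z.2 + s) /\ (forall s', z.2 <= s' -> s' < z.2 + s -> A1 (z.1, s'))].

Definition P0 := [set z : T * R | 0 <= z.2 /\ (0 : R) \in I /\ A2 z].
Definition P1 (q : R) := [set z : T * R | 0 <= z.2 /\ onco z q /\
  exists u, z.2 < u < q /\ ointv I (u - z.2) /\ A2 (z.1, u)].
Definition P2 (q e : R) := [set z : T * R | 0 <= z.2 /\ onco z q /\
  e \in I /\ 0 < e /\ z.2 + e < q /\ A2 (z.1, z.2 + e)].
Definition P3 (q : R) := [set z : T * R | 0 <= z.2 /\ z.2 < q /\ onco z q /\
  A1 (z.1, q) /\ (exists u, K q (z.1, u)) /\ h q z.1 - z.2 \in I].

Let mge := @mge _ T R.
Let mlt := @mlt _ T R.
Let mconst := @mconst _ T R.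

Lemma mP0 : measurable P0.
Proof.
apply: measurableI; first exact: (mge snd 0 measurable_snd).
by apply: measurableI => //; exact: mconst.
Qed.

Lemma mP1 q : measurable (P1 q).
Proof.
apply: measurableI; first exact: (mge snd 0 measurable_snd).
apply: measurableI; first exact: (@m_onco _ T R P cP A1 mA1 q).
have := @GL _ T R P cP A2 snd (cst q) (ointv I) mA2 measurable_snd
  (measurable_cst _) (ointv_open I) (ointv_is_interval I).
by apply.
Qed.

Lemma mP2 q e : measurable (P2 q e).
Proof.
apply: measurableI; first exact: (mge snd 0 measurable_snd).
apply: measurableI; first exact: (@m_onco _ T R P cP A1 mA1 q).
apply: measurableI; first exact: mconst.
apply: measurableI; first exact: mconst.
apply: measurableI; first by apply: mlt; exact: msnd_add.
by apply: mpre2 mA2; exact: mpair_add.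
Qed.

Lemma mP3 q : measurable (P3 q).
Proof.
apply: measurableI; first exact: (mge snd 0 measurable_snd).
apply: measurableI; first exact: (mlt snd q measurable_snd).
apply: measurableI; first exact: (@m_onco _ T R P cP A1 mA1 q).
apply: measurableI; first by apply: mpre2 mA1; exact: mpair_cst.
apply: measurableI.
  set G := (X in measurable X).
  rewrite (_ : G = [set z | (fst @` K q) z.1]).
    by apply: mfstset; apply: (@proj_meas _ T R P cP); exact: (@mK _ T R P cP A1 A2 mA1 mA2 q).
  apply/seteqP; split => z; rewrite /G /=.
    by move=> [u Ku]; exists (z.1, u).
  by move=> [[w u] Ku /= <-]; exists u.
apply: (@mpre _ T R _ [set` I]); last exact: measurable_itv.
apply: measurable_funB => //.
by apply: measurableT_comp => //; exact: (@mh _ T R P cP A1 A2 mA1 mA2 q).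
Qed.


Lemma onco_A1 w t q s' : onco (w, t) q -> t <= s' -> s' < q -> A1 (w, s').
Proof.
move=> [a nb] h1 h2; have [e|ne] := eqVneq s' t; first by rewrite e.
apply: contra_notP nb => na; exists s'; split => //.
by rewrite h2 andbT lt_neqAle eq_sym ne h1.
Qed.

Lemma P0_sub : P0 `<=` U.
Proof.
move=> [w t]; rewrite /P0 /U /= => -[t0 [I0 A2z]]; split => //; exists 0; split => //.
rewrite addr0; split => // s' h1 h2.
by move: (le_lt_trans h1 h2); rewrite ltxx.
Qed.

Lemma P1_sub q : P1 q `<=` U.
Proof.
move=> [w t]; rewrite /P1 /U /= => -[t0 [on [u [/andP[tu uq] [Ou A2u]]]]]; split => //.
exists (u - t); split; first exact: ointv_sub.
split; first by rewrite addrC subrK.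
move=> s' h1 h2; apply: onco_A1 on h1 _; lra.
Qed.

Lemma P2_sub q e : P2 q e `<=` U.
Proof.
move=> [w t]; rewrite /P2 /U /= => -[t0 [on [eI [e0 [teq A2e]]]]]; split => //.
exists e; split => //; split => // s' h1 h2.
apply: onco_A1 on h1 _; lra.
Qed.

Lemma P3_sub q : P3 q `<=` U.
Proof.
move=> [w t]; rewrite /P3 /U /= => -[t0 [tq [on [a1q [[u Ku] hIt]]]]]; split => //.
have := @hK _ T R A1 A2 q w (ex_intro _ u Ku).
rewrite -/h; set u' := h q w => -[qu' [_ [nb [_ A2u']]]].
exists (u' - t); split => //; split; first by rewrite addrC subrK.
move=> s' h1 h2.
have [sq|qs] := ltP s' q; first exact: onco_A1 on h1 sq.
have [e|ne] := eqVneq s' q; first by rewrite e.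
apply: contra_notP nb => na; exists s'; split => //.
rewrite /=; apply/andP; split; last by lra.
by rewrite lt_neqAle eq_sym ne qs.
Qed.

Definition Ubig := P0 `|` \bigcup_(q : rat) (P1 (ratr q) `|` P2 (ratr q) (iend I).1 `|`
  P2 (ratr q) (iend I).2 `|` P3 (ratr q)).

Lemma U_sub : U `<=` Ubig.
Proof.
move=> [w t]; rewrite /U /= => -[t0 [s [sI [A2s allA]]]].
have s0 := hI _ sI.
have [s0'|sn0] := eqVneq s 0.
  by left; split => //; split; [rewrite -s0'|rewrite s0' addr0 in A2s].
have spos : 0 < s by rewrite lt_neqAle eq_sym sn0 s0.
right.
have [[q0 [uq on]]|nex] := pselect (exists q0 : rat, t + s < ratr q0 /\ onco (w, t) (ratr q0)).
  exists q0 => //; have [Os|nOs] := pselect (ointv I s).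
    left; left; left; split => //; split => //; exists (t + s).
    split; first by rewrite /=; apply/andP; split; lra.
    by split => //; rewrite /= (_ : t + s - t = s) //; ring.
  have [e1|e2] := ointv_end I s sI nOs.
    by left; left; right; rewrite -e1; split => //; split => //; split => //; split => //; split => //; lra.
  by left; right; rewrite -e2; split => //; split => //; split => //; split => //; split => //; lra.
have tts : t < t + s by lra.
have [q0] := rat_in_itvoo tts; rewrite in_itv /= => /andP[tq qts].
exists q0 => //; right.
have on : onco (w, t) (ratr q0).
  split; first by apply: allA; lra.
  move=> [v [/= /andP[tv vq] nv]]; apply: nv; apply: allA; lra.
have Ku : K (ratr q0) (w, t + s).
  split => //; split; first by apply: allA; lra.
  split.
    move=> [v [/= /andP[qv vts] nv]]; apply: nv; apply: allA; lra.
  split => //.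
  move=> [q' [/= uq' [a1 nb]]]; apply: nex; exists q'; split => //; split.
    by apply: allA; lra.
  move=> [v [/= /andP[tv vq'] nv]].
  have [vq|qv] := leP v (ratr q0).
    by apply: nv; apply: allA; lra.
  by apply: nb; exists v; split => //; apply/andP; split.
split => //; split => //; split => //; split; first by apply: allA; lra.
split; first by exists (t + s).
have := @hK _ T R A1 A2 (ratr q0) w (ex_intro (fun u => K (ratr q0) (w, u)) _ Ku).
rewrite -/h => /(@K_uniq _ T R A1 A2 _ _ _ _ Ku) <-.
by rewrite (_ : t + s - t = s) //; ring.
Qed.

Lemma mU : measurable U.
Proof.
rewrite (_ : U = Ubig).
  apply: measurableU; first exact: mP0.
  apply: bigcupT_measurable_rat => q.
  apply: measurableU; last exact: mP3.
  apply: measurableU; last exact: mP2.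
  apply: measurableU; [exact: mP1|exact: mP2].
apply/seteqP; split; first exact: U_sub.
move=> z [/P0_sub //|[q _ [[[/P1_sub|/P2_sub]|/P2_sub]|/P3_sub]]] //.
Qed.

End main2.


Theorem lemma4p6 (R : realType) (d : measure_display)
    (Omega : measurableType d) (P : probability Omega R)
    (E : completePseudoMetricType R) (AP : Type)
    (X : R -> Omega -> E) (B : AP -> set E)
    (phi1 phi2 : mtl AP R) (I : interval R) :
  measure_is_complete P ->
  polish E ->
  (forall t : R, 0 <= t ->
     forall A : set E, borel_set A -> measurable (X t @^-1` A)) ->
  (forall a : AP, borel_set (B a)) ->
  mtl_wf phi1 -> mtl_wf phi2 ->
  (forall s : R, s \in I -> 0 <= s) ->
  measurable (mtl_den X B phi1) ->
  measurable (mtl_den X B phi2) ->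
  measurable (mtl_den X B (MUntil I phi1 phi2)).
Proof.
move=> cP _ _ _ _ _ hI m1 m2.
rewrite (_ : mtl_den X B (MUntil I phi1 phi2) =
   @U _ Omega R (mtl_den X B phi1) (mtl_den X B phi2) I).
  exact: (@mU _ Omega R P cP _ _ m1 m2 I hI).
apply/seteqP; split => -[w t] /=.
  move=> [t0 [s [sI [h2 h1]]]]; split => //; exists s; split => //; split.
    by split => //=; apply: addr_ge0 => //; exact: hI.
  move=> s' ts' s't; split => /=; last exact: h1.
  exact: le_trans ts'.
move=> [t0 [s [sI [h2 h1]]]]; split => //; exists s; split => //; split.
  by case: h2.
by move=> s' ts' s't; case: (h1 s' ts' s't).
Qed.
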